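(* Consider an $n$-level optimization problem with scalar variables $x_1,\dots,x_n\in\mathbb{R}$, and let $x_i^*(x_1,\dots,x_{i-1})$, $2\le i\le n$, be the (assumed unique and differentiable) best-response maps: $x_n^*(x_1,\dots,x_{n-1})=\operatorname{argmin}_{x_n} f_n(x_1,\dots,x_n)$ and, for $k=n-1,\dots,2$, $x_k^*(x_1,\dots,x_{k-1})=\operatorname{argmin}_{x_k} f_k(x_1,\dots,x_k,x_{k+1}^*,\dots,x_n^* )$ with the higher-index best responses evaluated recursively. Define $X_1(x_1)=x_1$ and $X_i(x_1)=x_i^*(x_1,X_2(x_1),\dots,X_{i-1}(x_1))$ for $i\ge 2$. Suppose there is $K\ge 0$ with $\big|\frac{\partial x_i^*}{\partial x_j}\big|\le K$ everywhere for all $1\le j<i\le n$. Let $M,N,S\ge 0$ be arbitrary constants and $J=\max\{M,N,K,S,1\}$. Then there is a constant $C$, independent of $i$ and $x_1$, such that for every $2\le i\le n$ and every $x_1\in\mathbb{R}$, $$\Big|\frac{\mathrm{d} X_i}{\mathrm{d} x_1}(x_1)\Big|\le C\big((i-1)J\big)^{i-1}.$$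
   Context: $\frac{\partial x_i^*}{\partial x_j}$ is the partial derivative of the best-response map $x_i^*$ with respect to its argument $x_j$; $\frac{\mathrm{d} X_i}{\mathrm{d} x_1}$ is the total derivative of the composite best response with respect to $x_1$. (In the paper $M,N,S$ are bounds on other derivatives; they play no role in the hypotheses here beyond entering $J$.) *)

(* Defs.v *)
From HB Require Import structures.
From mathcomp Require Import all_boot all_order all_algebra.
From mathcomp Require Import all_classical all_reals all_analysis.
Set Implicit Arguments. Unset Strict Implicit. Unset Printing Implicit Defensive.
Import Order.TTheory GRing.Theory Num.Theory.
Import numFieldNormedType.Exports.
Local Open Scope ring_scope.

(* Variables are 0-indexed: coordinate k of a row vector v : 'rV[R]_n
   stands for the paper's x_{k+1}. *)

Definition set_coord (R : realType) (n : nat) (v : 'rV[R]_n) (m : nat) (a : R)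
  : 'rV[R]_n := \row_j (if (j : nat) == m then a else v 0 j).

Fixpoint fill_from (R : realType) (n : nat) (br : nat -> 'rV[R]_n -> R)
  (m cnt : nat) (v : 'rV[R]_n) : 'rV[R]_n :=
  match cnt with
  | 0 => v
  | cnt'.+1 => fill_from br m.+1 cnt' (set_coord v m (br m v))
  end.

Definition complete (R : realType) (n : nat) (br : nat -> 'rV[R]_n -> R)
  (m : nat) (v : 'rV[R]_n) : 'rV[R]_n := fill_from br m (n - m) v.

(* The composite best-response path: X x1 = (X_1(x1), ..., X_n(x1)). *)
Definition Xpath (R : realType) (n : nat) (br : nat -> 'rV[R]_n -> R) (x1 : R)
  : 'rV[R]_n := complete br 1 (\row_j x1).

Definition depends_on_prefix (R : realType) (n : nat) (br : nat -> 'rV[R]_n -> R)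
  (k : nat) : Prop :=
  forall v w : 'rV[R]_n, (forall j : 'I_n, (j < k)%N -> v 0 j = w 0 j) ->
    br k v = br k w.

Definition unique_argmin_br (R : realType) (n : nat) (f br : nat -> 'rV[R]_n -> R)
  (k : nat) : Prop :=
  forall (v : 'rV[R]_n) (t : R), t != br k v ->
    f k (complete br k.+1 (set_coord v k (br k v)))
      < f k (complete br k.+1 (set_coord v k t)).

(* Main.v *)
Require Import Defs.
From HB Require Import structures.
From mathcomp Require Import all_boot all_order all_algebra.
From mathcomp Require Import all_classical all_reals all_analysis.
From mathcomp Require Import zify.
Import Order.TTheory GRing.Theory Num.Theory.
Import numFieldNormedType.Exports.
Local Open Scope ring_scope.

Lemma fill_spec (R : realType) (n : nat) (br : nat -> 'rV[R]_n -> R)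
  (hdep : forall k : nat, (1 <= k < n)%N -> depends_on_prefix br k)
  (cnt m : nat) (v : 'rV[R]_n) : (1 <= m)%N -> forall j : 'I_n,
  fill_from br m cnt v 0 j =
    if (m <= j < m + cnt)%N then br j (fill_from br m cnt v) else v 0 j.
Proof.
elim: cnt m v => [|cnt IH] m v hm j /=.
  by have -> : (m <= j < m + 0)%N = false by lia.
set v' := set_coord v m (br m v).
set P := fill_from br m.+1 cnt v'.
have IHP := IH m.+1 v' (ltnW (leq_trans hm (leqnSn m))).
have hv' : forall l : 'I_n, v' 0 l = if (l : nat) == m then br m v else v 0 l.
  by move=> l; rewrite /v' /set_coord mxE.
rewrite IHP; case: (eqVneq (j : nat) m) => hjm.
  have -> : (m.+1 <= j < m.+1 + cnt)%N = false by lia.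
  have -> : (m <= j < m + cnt.+1)%N = true by lia.
  rewrite hv' hjm eqxx.
  have hk : (1 <= m < n)%N by rewrite hm -hjm ltn_ord.
  apply: (hdep m hk) => l hl.
  rewrite IHP.
  have -> : (m.+1 <= l < m.+1 + cnt)%N = false by lia.
  by rewrite hv' (ltn_eqF hl).
have -> : (m.+1 <= j < m.+1 + cnt)%N = (m <= j < m + cnt.+1)%N by lia.
by case: ifP => // _; rewrite hv' (negbTE hjm).
Qed.

Lemma Xpath_spec (R : realType) (n : nat) (br : nat -> 'rV[R]_n -> R)
  (hdep : forall k : nat, (1 <= k < n)%N -> depends_on_prefix br k)
  (t : R) (j : 'I_n) :
  Xpath br t 0 j = if (1 <= j)%N then br j (Xpath br t) else t.
Proof.
rewrite /Xpath /complete fill_spec //.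
have -> : (1 <= j < 1 + (n - 1))%N = (1 <= j)%N.
  by have := ltn_ord j; lia.
by case: ifP => // _; rewrite mxE.
Qed.

Lemma geom_bound (R : realType) (K : R) (hK0 : 0 <= K) (j : nat) :
  \sum_(l < j) (1 + K) ^+ l * K <= (1 + K) ^+ j.
Proof.
elim: j => [|j IH]; first by rewrite big_ord0 expr0.
rewrite big_ord_recr /= exprSr mulrDr mulr1 lerD2r.
exact: IH.
Qed.
Lemma step (R : realType) (n : nat) (br : nat -> 'rV[R]_n -> R) (K : R)
  (hdep : forall k : nat, (1 <= k < n)%N -> depends_on_prefix br k)
  (hdiff : forall (k : nat) (v : 'rV[R]_n), (1 <= k < n)%N -> differentiable (br k) v)
  (hK0 : 0 <= K)
  (hK : forall (k : nat) (j : 'I_n) (v : 'rV[R]_n), (j < k < n)%N ->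
          `| 'D_(delta_mx 0 j) (br k) v | <= K)
  (j : 'I_n) (hj : (1 <= j)%N)
  (IH : forall l : 'I_n, (l < j)%N -> forall t,
     differentiable (fun s => Xpath br s 0 l) t /\
     `| 'd (fun s => Xpath br s 0 l) t 1 | <= (1 + K) ^+ l) :
  forall t, differentiable (fun s => Xpath br s 0 j) t /\
     `| 'd (fun s => Xpath br s 0 j) t 1 | <= (1 + K) ^+ j.
Proof.
move=> t.
have hjn : (1 <= j < n)%N by rewrite hj ltn_ord.
pose c (l : 'I_n) : R -> R :=
  if (l < j)%N then (fun s => Xpath br s 0 l) else cst 0.
pose W := \sum_(l < n) (fun s => c l s *: (delta_mx 0 l : 'rV[R]_n)).
have dc : forall l t, differentiable (c l) t.
  by move=> l t'; rewrite /c; case: ifP => hl; [exact: (IH l hl t').1 | exact: differentiable_cst].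
have dW : forall t, differentiable W t.
  by move=> t'; apply: differentiable_sum => l; apply: differentiableZl.
have WE : forall s (l' : 'I_n), W s 0 l' = if (l' < j)%N then Xpath br s 0 l' else 0.
  move=> s l'; rewrite /W fct_sumE summxE (bigD1 l') //= big1 => [|k hk].
    by rewrite !mxE !eqxx mulr1 addr0 /c; case: ifP.
  rewrite !mxE eqxx /=; case: eqP => [e|]; last by rewrite mulr0.
  by move: hk; rewrite e eqxx.
have XE : (fun s => Xpath br s 0 j) = br j \o W.
  apply/funext => s /=; rewrite Xpath_spec // hj; apply: (hdep j hjn) => l hl.
  by rewrite WE hl.
rewrite XE; split; first by apply: differentiable_comp; [exact: dW | exact: hdiff].
rewrite diff_comp //=; last exact: hdiff.
have -> : 'd W t 1 = \sum_(l < n) ('d (c l) t 1 *: (delta_mx 0 l : 'rV[R]_n)).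
  rewrite -deriveE // /W derive_sum; last first.
    by move=> l; apply: diff_derivable; apply: differentiableZl.
  apply: eq_bigr => l _; rewrite deriveE; last exact: differentiableZl.
  by rewrite diffZl.
rewrite raddf_sum.
apply: (le_trans (ler_norm_sum _ _ _)).
apply: (@le_trans _ _ (\sum_(l < n | (l < j)%N) (1 + K) ^+ l * K)).
  rewrite (bigID (fun l : 'I_n => (l < j)%N)) /= -[X in _ <= X]addr0.
  apply: lerD.
    apply: ler_sum => l hl.
    rewrite linearZ /= normrM -(deriveE (f:=br j)); last exact: hdiff.
    apply: ler_pM => //; first by rewrite /c hl; exact: (IH l hl t).2.
    by apply: hK; rewrite hl ltn_ord.
  rewrite big1 // => l hl.
  by rewrite /c (negbTE hl) diff_cst /= scale0r linear0 normr0.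
have -> : \sum_(l < n | (l < j)%N) (1 + K) ^+ l * K = \sum_(l < j) (1 + K) ^+ l * K.
  by rewrite (@big_ord_widen_cond _ 0 +%R j n xpredT (fun l : nat => (1+K)^+l*K) (ltnW (ltn_ord j))).
exact: geom_bound.
Qed.

Theorem lemma7 (R : realType) (n : nat)
  (f br : nat -> 'rV[R]_n -> R) (K M N S : R)
  (hdep : forall k : nat, (1 <= k < n)%N -> depends_on_prefix br k)
  (hargmin : forall k : nat, (1 <= k < n)%N -> unique_argmin_br f br k)
  (hdiff : forall (k : nat) (v : 'rV[R]_n), (1 <= k < n)%N -> differentiable (br k) v)
  (hK0 : 0 <= K) (hM0 : 0 <= M) (hN0 : 0 <= N) (hS0 : 0 <= S)
  (hK : forall (k : nat) (j : 'I_n) (v : 'rV[R]_n), (j < k < n)%N ->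
          `| 'D_(delta_mx 0 j) (br k) v | <= K) :
  let J := Num.max M (Num.max N (Num.max K (Num.max S 1))) in
  exists C : R, forall (i : 'I_n) (x1 : R), (1 <= i)%N ->
    `| derive1 (fun t : R => Xpath br t 0 i) x1 | <= C * (i%:R * J) ^+ i.
Proof.
move=> J.
have main : forall m (j : 'I_n), (j <= m)%N -> forall t,
     differentiable (fun s => Xpath br s 0 j) t /\
     `| 'd (fun s => Xpath br s 0 j) t 1 | <= (1 + K) ^+ j.
  elim=> [|m IHm] j hjm t.
    have hj0 : (j : nat) = 0%N by lia.
    have -> : (fun s => Xpath br s 0 j) = id.
      by apply/funext => s; rewrite Xpath_spec // hj0.
    have did : differentiable (@id R) t by apply/derivable1_diffP; exact: derivable_id.
    split; first exact: did.
    by rewrite -deriveE // derive_id normr1 hj0 expr0.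
  have [hj|hj] := leqP (j : nat) 0%N.
    have hj0 : (j : nat) = 0%N by lia.
    have -> : (fun s => Xpath br s 0 j) = id.
      by apply/funext => s; rewrite Xpath_spec // hj0.
    have did : differentiable (@id R) t by apply/derivable1_diffP; exact: derivable_id.
    split; first exact: did.
    by rewrite -deriveE // derive_id normr1 hj0 expr0.
  apply: (@step R n br K hdep hdiff hK0 hK j hj) => l hl; apply: IHm; lia.
have J1 : 1 <= J by rewrite /J !le_max lexx !orbT.
exists ((1 + K) ^+ n) => i x1 hi.
have [di bi] := main i i (leqnn _) x1.
rewrite derive1E'; last exact: di.
apply: (le_trans bi).
have hK1 : 1 <= 1 + K by rewrite lerDl.
apply: (@le_trans _ _ ((1 + K) ^+ n)).
  by apply: ler_weXn2l => //; rewrite ltnW // ltn_ord.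
apply: ler_peMr; first by apply: exprn_ge0; apply: addr_ge0.
apply: exprn_ege1.
have hi1 : (1 : R) <= i%:R by rewrite ler1n.
apply: (le_trans hi1); exact: ler_peMr.
Qed.
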